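(* Let $0<m\le L$ and let $(\alpha,\beta,\gamma)$ be constant parameters. Define $a(\lambda)=\beta-\gamma\alpha\lambda$ and $b(\lambda)=(1+\gamma)\alpha\lambda-(1+\beta)$. The two-step momentum algorithm is stable for all $f\in\mathcal{Q}_m^L$ if and only if (1) $(b(\lambda),a(\lambda))\in\Delta$ for all $\lambda\in[m,L]$, equivalently (2) $(b(\lambda),a(\lambda))\in\Delta$ for $\lambda\in\{m,L\}$. Furthermore, for $\rho\in(0,1)$, the linear convergence rate $\rho$ is achieved for all $f\in\mathcal{Q}_m^L$ if and only if (1) $(b(\lambda),a(\lambda))\in\Delta_\rho$ for all $\lambda\in[m,L]$, equivalently (2) $(b(\lambda),a(\lambda))\in\Delta_\rho$ for $\lambda\in\{m,L\}$. Here $\Delta=\{(b,a):|b|-1<a<1\}$ and $\Delta_\rho=\{(b,a):\rho(|b|-\rho)\le a\le\rho^2\}$.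
   Context: $\mathcal{Q}_m^L$ is the class of quadratic functions $f(x)=\tfrac12x^TQx-q^Tx$ on $\mathbb{R}^n$ with $q\in\mathbb{R}^n$, $Q=Q^T\succ0$ whose largest eigenvalue is $L$ and smallest is $m$; $x^\star$ is the minimizer. The (noiseless) two-step momentum algorithm is $x^{t+2}=x^{t+1}+\beta(x^{t+1}-x^t)-\alpha\nabla f\big(x^{t+1}+\gamma(x^{t+1}-x^t)\big)$; with $\psi^t=[(x^t-x^\star)^T,(x^{t+1}-x^\star)^T]^T$, $\psi^{t+1}=A\psi^t$, $A=\begin{bmatrix}0&I\\-\beta I+\gamma\alpha Q&(1+\beta)I-(1+\gamma)\alpha Q\end{bmatrix}$. The algorithm is stable for all $f\in\mathcal{Q}_m^L$ if the spectral radius of $A$ is less than $1$ for every $f\in\mathcal{Q}_m^L$; it achieves linear convergence rate $\rho$ for all $f\in\mathcal{Q}_m^L$ if the spectral radius of $A$ is at most $\rho$ for every $f\in\mathcal{Q}_m^L$. *)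

(* Defs.v *)
From HB Require Import structures.
From mathcomp Require Import all_boot all_order all_algebra.
From mathcomp Require Import complex.
Set Implicit Arguments. Unset Strict Implicit. Unset Printing Implicit Defensive.
Import Order.TTheory GRing.Theory Num.Theory.
Local Open Scope ring_scope.
Local Open Scope complex_scope.

Section Defs.
Variable R : rcfType.

Definition in_QmL (n : nat) (m L : R) (Q : 'M[R]_n) : Prop :=
  [/\ Q^T = Q,
      (forall x : 'rV[R]_n, x != 0 -> 0 < (x *m Q *m x^T) ord0 ord0),
      eigenvalue Q m, eigenvalue Q L &
      (forall a, eigenvalue Q a -> m <= a <= L)].

Definition momA (n : nat) (alpha beta gamma : R) (Q : 'M[R]_n) : 'M[R]_(n + n) :=
  block_mx 0 1%:M
           (- beta%:M + (gamma * alpha) *: Q)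
           ((1 + beta)%:M - ((1 + gamma) * alpha) *: Q).

Definition eigvalC (k : nat) (A : 'M[R]_k) (z : R[i]) : Prop :=
  root (char_poly (map_mx (fun x : R => x%:C) A)) z.

Definition spec_rad_lt (k : nat) (A : 'M[R]_k) (r : R) : Prop :=
  forall z, eigvalC A z -> `|z| < r%:C.
Definition spec_rad_le (k : nat) (A : 'M[R]_k) (r : R) : Prop :=
  forall z, eigvalC A z -> `|z| <= r%:C.

Definition stable_all (n : nat) (m L alpha beta gamma : R) : Prop :=
  forall Q : 'M[R]_n, in_QmL m L Q -> spec_rad_lt (momA alpha beta gamma Q) 1.
Definition rate_all (n : nat) (m L alpha beta gamma rho : R) : Prop :=
  forall Q : 'M[R]_n, in_QmL m L Q -> spec_rad_le (momA alpha beta gamma Q) rho.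

Definition a_fun (alpha beta gamma lam : R) : R := beta - gamma * alpha * lam.
Definition b_fun (alpha beta gamma lam : R) : R :=
  (1 + gamma) * alpha * lam - (1 + beta).

Definition in_Delta (b a : R) : Prop := `|b| - 1 < a < 1.
Definition in_Delta_rho (rho b a : R) : Prop := rho * (`|b| - rho) <= a <= rho ^+ 2.

End Defs.

(* Main.v *)
Require Import Defs.
From HB Require Import structures.
From mathcomp Require Import all_boot all_order all_algebra.
From mathcomp Require Import complex ring lra.
Import Order.TTheory GRing.Theory Num.Theory.
Local Open Scope ring_scope.

Section Real.
Variable R : rcfType.

Lemma absb_lt (b c : R) : (`|b| < c) <-> (b < c /\ - b < c).
Proof. by rewrite ltr_norml; split => [/andP[h1 h2]|[h1 h2]]; [split|apply/andP; split]; lra. Qed.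
Lemma absb_le (b c : R) : (`|b| <= c) <-> (b <= c /\ - b <= c).
Proof. by rewrite ler_norml; split => [/andP[h1 h2]|[h1 h2]]; [split|apply/andP; split]; lra. Qed.

Lemma LA (b a : R) : in_Delta b a <->
  (forall x y : R, x^+2 - y^+2 + b * x + a = 0 -> (2 * x + b) * y = 0 -> x^+2 + y^+2 < 1).
Proof.
rewrite /in_Delta; split.
- move=> /andP[h1 h2]; have /absb_lt [hb1 hb2] : `|b| < a + 1 by lra.
  move=> x y e1 /eqP; rewrite mulf_eq0 => /orP[/eqP e2|/eqP ey].
  + have ex : x = - b / 2 by lra.
    rewrite ex in e1 *.
    have : y ^+ 2 = a - b^+2/4 by lra.
    nra.
  + subst y; have e0 : (0:R) ^+ 2 = 0 by rewrite expr2 mulr0.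
    rewrite e0 subr0 in e1; rewrite e0 addr0.
    set r := - b - x.
    have ea : a = x * r by rewrite /r; nra.
    have h3 : 0 < (1 - x) * (1 - r) by rewrite /r; nra.
    have h4 : 0 < (1 + x) * (1 + r) by rewrite /r; nra.
    have h5 : x * r < 1 by rewrite -ea.
    case: (ltrP x 1) => hx1; case: (ltrP (-1) x) => hx2; try nra.
- move=> H.
  have [hd|hd] := ltrP (b^+2 - 4 * a) 0.
  + set y := Num.sqrt (4 * a - b^+2) / 2.
    have ey : y ^+ 2 = a - b^+2/4.
      rewrite /y expr_div_n sqr_sqrtr; lra.
    have := H (- b / 2) y.
    move=> /(_ _ _); rewrite ey.
    move=> H'; have {H'} := H' ltac:(lra) ltac:(lra).
    move=> h; apply/andP; split; last lra.
    have : `|b| < a + 1; last lra.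
    apply/absb_lt; split; nra.
  + set s := Num.sqrt (b^+2 - 4 * a).
    have es : s ^+ 2 = b^+2 - 4 * a by rewrite sqr_sqrtr; lra.
    have h1 := H ((- b + s)/2) 0 ltac:(nra) ltac:(by rewrite mulr0).
    have h2 := H ((- b - s)/2) 0 ltac:(nra) ltac:(by rewrite mulr0).
    have e0 : (0:R) ^+ 2 = 0 by rewrite expr2 mulr0.
    rewrite e0 addr0 in h1 h2.
    set x1 := (- b + s)/2 in h1; set x2 := (- b - s)/2 in h2.
    have ea : a = x1 * x2 by rewrite /x1 /x2; nra.
    have eb : b = - x1 - x2 by rewrite /x1 /x2; lra.
    have [h11 h12] : -1 < x1 /\ x1 < 1 by split; nra.
    have [h21 h22] : -1 < x2 /\ x2 < 1 by split; nra.
    apply/andP; split; last by rewrite ea; nra.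
    have : `|b| < a + 1; last lra.
    apply/absb_lt; rewrite ea eb; split.
    + have : 0 < (1 - x1) * (1 - x2) by apply: mulr_gt0; lra.
      nra.
    + have : 0 < (1 + x1) * (1 + x2) by apply: mulr_gt0; lra.
      nra.
Qed.

Lemma absrho (rho b c : R) : 0 < rho -> rho * b <= c -> - (rho * b) <= c -> rho * `|b| <= c.
Proof. by move=> hr h1 h2; have [hb|hb] := lerP 0 b; [rewrite ger0_norm | rewrite ltr0_norm //]; lra. Qed.

Lemma LB (rho b a : R) : 0 < rho -> in_Delta_rho rho b a <->
  (forall x y : R, x^+2 - y^+2 + b * x + a = 0 -> (2 * x + b) * y = 0 -> x^+2 + y^+2 <= rho^+2).
Proof.
move=> hr; rewrite /in_Delta_rho; split.
- move=> /andP[h1 h2].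
  have hb1 : rho * b <= a + rho^+2.
    have : rho * b <= rho * `|b| by rewrite ler_pM2l // ler_norm.
    nra.
  have hb2 : - (rho * b) <= a + rho^+2.
    have : rho * (- b) <= rho * `|b| by rewrite ler_pM2l // -normrN ler_norm.
    nra.
  move=> x y e1 /eqP; rewrite mulf_eq0 => /orP[/eqP e2|/eqP ey].
  + have ex : x = - b / 2 by lra.
    rewrite ex in e1 *.
    have : y ^+ 2 = a - b^+2/4 by lra.
    nra.
  + subst y; have e0 : (0:R) ^+ 2 = 0 by rewrite expr2 mulr0.
    rewrite e0 subr0 in e1; rewrite e0 addr0.
    set r := - b - x.
    have ea : a = x * r by rewrite /r; nra.
    have h3 : 0 <= (rho - x) * (rho - r) by rewrite /r; nra.
    have h4 : 0 <= (rho + x) * (rho + r) by rewrite /r; nra.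
    have h5 : x * r <= rho ^+ 2 by rewrite -ea.
    case: (lerP x rho) => hx1; case: (lerP (- rho) x) => hx2.
    * nra.
    * have : rho + r <= 0.
        case: (lerP (rho + r) 0) => // hh; nra.
      nra.
    * have : rho - r <= 0.
        case: (lerP (rho - r) 0) => // hh; nra.
      nra.
    * lra.
- move=> H.
  have [hd|hd] := ltrP (b^+2 - 4 * a) 0.
  + set y := Num.sqrt (4 * a - b^+2) / 2.
    have ey : y ^+ 2 = a - b^+2/4.
      rewrite /y expr_div_n sqr_sqrtr; lra.
    have := H (- b / 2) y.
    move=> /(_ _ _); rewrite ey.
    move=> H'; have {H'} := H' ltac:(lra) ltac:(lra).
    move=> h; apply/andP; split; last lra.
    have : `|b| ^+ 2 = b ^+ 2 by rewrite real_normK // num_real.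
    have := normr_ge0 b.
    nra.
  + set s := Num.sqrt (b^+2 - 4 * a).
    have es : s ^+ 2 = b^+2 - 4 * a by rewrite sqr_sqrtr; lra.
    have h1 := H ((- b + s)/2) 0 ltac:(nra) ltac:(by rewrite mulr0).
    have h2 := H ((- b - s)/2) 0 ltac:(nra) ltac:(by rewrite mulr0).
    have e0 : (0:R) ^+ 2 = 0 by rewrite expr2 mulr0.
    rewrite e0 addr0 in h1 h2.
    set x1 := (- b + s)/2 in h1; set x2 := (- b - s)/2 in h2.
    have ea : a = x1 * x2 by rewrite /x1 /x2; nra.
    have eb : b = - x1 - x2 by rewrite /x1 /x2; lra.
    have [h11 h12] : - rho <= x1 /\ x1 <= rho by split; nra.
    have [h21 h22] : - rho <= x2 /\ x2 <= rho by split; nra.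
    apply/andP; split; last by rewrite ea; nra.
    have : rho * `|b| <= a + rho ^+ 2; last lra.
    apply: absrho => //; rewrite ea eb.
    + have : 0 <= (rho - x1) * (rho - x2) by apply: mulr_ge0; lra.
      nra.
    + have : 0 <= (rho + x1) * (rho + x2) by apply: mulr_ge0; lra.
      nra.
Qed.
End Real.

Section Cplx.
Variable R : rcfType.
Local Open Scope complex_scope.

Lemma quad_eq (b a x y : R) : ((x +i* y)^+2 + b%:C * (x +i* y) + a%:C = 0) <->
   (x^+2 - y^+2 + b*x + a = 0 /\ (2*x+b)*y = 0).
Proof.
rewrite expr2; simpc. split.
- move/eqP; rewrite eq_complex /= => /andP[/eqP h1 /eqP h2]; split; lra.
- case=> h1 h2; apply/eqP; rewrite eq_complex /=; apply/andP; split; apply/eqP; lra.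
Qed.

Lemma norm_lt (x y r : R) : 0 < r -> (`|x +i* y| < r%:C) <-> (x^+2 + y^+2 < r^+2).
Proof.
move=> hr; rewrite normc_def /= ltcR.
have {1}-> : r = Num.sqrt (r^+2) by rewrite sqrtr_sqr gtr0_norm.
by rewrite ltr_sqrt // exprn_gt0.
Qed.

Lemma norm_le (x y r : R) : 0 <= r -> (`|x +i* y| <= r%:C) <-> (x^+2 + y^+2 <= r^+2).
Proof.
move=> hr; rewrite normc_def /= lecR.
have {1}-> : r = Num.sqrt (r^+2) by rewrite sqrtr_sqr ger0_norm.
by rewrite ler_sqrt // exprn_ge0.
Qed.

Lemma CA (b a : R) : (forall z : R[i], z^+2 + b%:C * z + a%:C = 0 -> `|z| < 1%:C) <-> in_Delta b a.
Proof.
rewrite LA; split.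
- move=> H x y e1 e2; rewrite -(expr1n _ 2) ; apply/norm_lt; first exact: ltr01.
  by apply: H; apply/quad_eq.
- move=> H [x y] /quad_eq [e1 e2]; apply/norm_lt; first exact: ltr01.
  by rewrite expr1n; apply: H.
Qed.

Lemma CB (rho b a : R) : 0 < rho ->
  (forall z : R[i], z^+2 + b%:C * z + a%:C = 0 -> `|z| <= rho%:C) <-> in_Delta_rho rho b a.
Proof.
move=> hr; rewrite LB //; split.
- move=> H x y e1 e2; apply/norm_le; first exact: ltW.
  by apply: H; apply/quad_eq.
- move=> H [x y] /quad_eq [e1 e2]; apply/norm_le; first exact: ltW.
  by apply: H.
Qed.
End Cplx.

Section Eig.
Variable R : rcfType.
Local Open Scope complex_scope.
Variables (n : nat) (al be ga : R).
Local Notation f := (real_complex R).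

Lemma momA_map (Q : 'M[R]_n) :
  map_mx (fun x : R => x%:C) (momA al be ga Q) =
  block_mx 0 1%:M (- (be%:C)%:M + (ga * al)%:C *: map_mx f Q)
                  ((1 + be)%:C%:M - ((1 + ga) * al)%:C *: map_mx f Q).
Proof.
rewrite /momA map_block_mx map_mx0 map_mx1 !map_mxD !map_mxN !map_mxZ.
by rewrite !map_scalar_mx.
Qed.


Lemma mulCc (Q : 'M[R]_n) (y : 'rV[R[i]]_n) :
  y *m (- (be%:C)%:M + (ga * al)%:C *: map_mx f Q) =
  - (be%:C) *: y + (ga * al)%:C *: (y *m map_mx f Q).
Proof. by rewrite mulmxDr mulmxN mul_mx_scalar -scalemxAr scaleNr. Qed.

Lemma mulDc (Q : 'M[R]_n) (y : 'rV[R[i]]_n) :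
  y *m ((1 + be)%:C%:M - ((1 + ga) * al)%:C *: map_mx f Q) =
  (1 + be)%:C *: y - ((1 + ga) * al)%:C *: (y *m map_mx f Q).
Proof. by rewrite mulmxDr mulmxN mul_mx_scalar -scalemxAr. Qed.

Lemma E1 (Q : 'M[R]_n) (lam : R) (z : R[i]) : eigenvalue Q lam ->
  z^+2 + (b_fun al be ga lam)%:C * z + (a_fun al be ga lam)%:C = 0 ->
  eigvalC (momA al be ga Q) z.
Proof.
move=> /eigenvalueP [v hv v0] ez.
rewrite /eigvalC -eigenvalue_root_char momA_map; apply/eigenvalueP.
set y := map_mx f v.
have hy : y *m map_mx f Q = lam%:C *: y by rewrite -map_mxM hv map_mxZ.
have y0 : y != 0 by rewrite map_mx_eq0.
set d := (1 + be)%:C - ((1 + ga) * al * lam)%:C.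
exists (row_mx ((z - d) *: y) y); last by rewrite row_mx_eq0 negb_and y0 orbT.
rewrite mul_row_block mulmx0 add0r mulmx1 mulCc mulDc hy scale_row_mx.
rewrite !scalerA -!scalerDl -scalerBl.
congr row_mx; last first.
  rewrite -scalerDl; congr (_ *: _).
  rewrite /d !rmorphM /=; ring.
congr (_ *: _).
move: ez; rewrite /d /a_fun /b_fun !rmorphB !rmorphD !rmorphM /= !rmorph1.
move=> ez; apply/esym; apply: subr0_eq; rewrite -ez; ring.
Qed.


Lemma conj_map (Q : 'M[R]_n) : map_mx conjc (map_mx f Q) = map_mx f Q.
Proof. by apply/matrixP => i j; rewrite !mxE conjc_real. Qed.

Lemma normsq_neq0 (y : 'rV[R[i]]_n) : y != 0 -> (y *m (map_mx conjc y)^T) 0 0 != 0.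
Proof.
move=> y0; apply: contra y0 => /eqP h; apply/eqP/rowP => j.
rewrite mxE in h.
have h2 : \sum_(k < n) y 0 k * (y 0 k)^* = 0.
  by rewrite -[RHS]h; apply: eq_bigr => k _; rewrite !mxE.
have := (psumr_eq0P (fun k _ => mulcJ_ge0 (y 0 k)) h2 (i:=j) isT).
move/eqP; rewrite mulf_eq0 conjc_eq0 orbb => /eqP ->.
by rewrite mxE.
Qed.


Lemma conj_real_eq (c : R[i]) : c^* = c -> c = (complex.Re c)%:C.
Proof.
case: c => p q; rewrite /conjc => -[hq]; congr Complex; lra.
Qed.

Lemma aux_lin (A1 A2 G u : R[i]) : A1 = 0 -> A2 = 0 -> G = A1 + u * A2 -> G = 0.
Proof. by move=> -> -> ->; rewrite mulr0 addr0. Qed.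

Lemma E2 (Q : 'M[R]_n) (lam0 : R) (z : R[i]) : Q^T = Q -> eigenvalue Q lam0 ->
  eigvalC (momA al be ga Q) z ->
  exists mu, eigenvalue Q mu /\
    z^+2 + (b_fun al be ga mu)%:C * z + (a_fun al be ga mu)%:C = 0.
Proof.
move=> hQ hl0; rewrite /eigvalC -eigenvalue_root_char momA_map => /eigenvalueP [w hw w0].
set Qc := map_mx f Q in hw.
rewrite -[w]hsubmxK in hw w0.
set x := lsubmx w in hw w0; set y := rsubmx w in hw w0.
rewrite mul_row_block mulmx0 add0r mulmx1 mulCc mulDc scale_row_mx in hw.
case/eq_row_mx: hw => E1 E2.
set wq := y *m Qc in E1 E2.
set k := al%:C * (ga%:C - z * (1 + ga)%:C).
set s := z^+2 - (1+be)%:C * z + be%:C.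
have key : k *: wq = s *: y.
  apply/rowP => j.
  have e1 := congr1 (fun M : 'rV[R[i]]_n => M 0 j) E1; have e2 := congr1 (fun M : 'rV[R[i]]_n => M 0 j) E2.
  rewrite /= !mxE !rmorphM /= in e1 e2; rewrite !mxE.
  move/eqP: e1; rewrite -subr_eq0 => /eqP e1.
  move/eqP: e2; rewrite -subr_eq0 => /eqP e2.
  apply/eqP; rewrite -subr_eq0; apply/eqP.
  apply: (@aux_lin _ _ _ z e1 e2).
  rewrite /k /s; ring.
have y0 : y != 0.
  apply: contraNneq w0 => hy0.
  move: E2; rewrite /wq hy0 mul0mx !scaler0 subr0 addr0 => ->.
  by rewrite row_mx0 eqxx.
have eqmu : forall mu : R, z^+2 + (b_fun al be ga mu)%:C * z + (a_fun al be ga mu)%:C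
     = s - k * mu%:C.
  by move=> mu; rewrite /s /k /a_fun /b_fun !rmorphB !rmorphD !rmorphM /= !rmorph1; ring.
have [k0|k0] := eqVneq k 0.
  exists lam0; split => //; rewrite eqmu k0 mul0r subr0.
  move: key; rewrite k0 scale0r => /esym/eqP; rewrite scaler_eq0 (negPf y0) orbF.
  by move/eqP.
set mu := k^-1 * s.
have hwq : wq = mu *: y by rewrite /mu -scalerA -key scalerA mulVf // scale1r.
set yb := map_mx conjc y.
have hc : yb *m Qc = mu^* *: yb.
  by have := congr1 (map_mx conjc) hwq; rewrite /wq map_mxM conj_map map_mxZ.
have t1 : y *m Qc *m yb^T = mu *: (y *m yb^T) by rewrite -/wq hwq -scalemxAl.
have t2 : y *m Qc *m yb^T = mu^* *: (y *m yb^T).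
  have hQc : Qc^T = Qc.
    by apply/matrixP => i j; rewrite !mxE -[in RHS]hQ mxE.
  rewrite -mulmxA.
  have -> : Qc *m yb^T = (yb *m Qc)^T by rewrite trmx_mul hQc.
  by rewrite hc linearZ /= scalemxAr.
have hN := normsq_neq0 y y0.
have hmu : mu^* = mu.
  have := congr1 (fun M : 'M[R[i]]_1 => M 0 0) (etrans (esym t1) t2).
  rewrite /= [LHS]mxE [RHS]mxE => /eqP; rewrite -subr_eq0 -mulrBl mulf_eq0 (negPf hN) orbF.
  by rewrite subr_eq0 => /eqP.
have hmuR := conj_real_eq mu hmu.
exists (complex.Re mu); split.
  have hev : eigenvalue Qc mu.
    by apply/eigenvalueP; exists y => //; rewrite -/wq hwq.
  rewrite -(eigenvalue_map f); move: hev; rewrite {1}hmuR; exact.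
by rewrite eqmu -hmuR /mu mulrA mulfV // mul1r subrr.
Qed.

End Eig.

Section Diag.
Variable R : rcfType.
Variable n : nat.

Lemma row_nz (v : 'rV[R]_n) : v != 0 -> exists j, v 0 j != 0.
Proof.
move=> v0; apply/existsP; apply: contraR v0 => /existsPn h.
by apply/eqP/rowP => j; rewrite mxE; apply/eqP; move: (h j); rewrite negbK.
Qed.

Lemma diag_eig (d : 'rV[R]_n) a : eigenvalue (diag_mx d) a <-> exists j, a = d 0 j.
Proof.
split.
- move/eigenvalueP => [v hv v0]; have [j hj] := row_nz v v0.
  exists j; have := congr1 (fun M : 'rV[R]_n => M 0 j) hv.
  rewrite /= mul_mx_diag !mxE [X in _ = X]mulrC => /eqP; rewrite -subr_eq0 -mulrBr mulf_eq0 (negPf hj) /=.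
  by rewrite subr_eq0 => /eqP.
- move=> [j ->]; apply/eigenvalueP; exists (delta_mx 0 j).
    apply/matrixP => i k; rewrite mul_mx_diag !mxE.
    by have [->|hk] := eqVneq k j; [rewrite andbT mulrC | rewrite andbF mul0r mulr0].
  apply/eqP => /matrixP /(_ 0 j); rewrite !mxE !eqxx /= => /eqP.
  by rewrite oner_eq0.
Qed.

Lemma diag_pos (d : 'rV[R]_n) : (forall j, 0 < d 0 j) ->
  forall x : 'rV[R]_n, x != 0 -> 0 < (x *m diag_mx d *m x^T) 0 0.
Proof.
move=> hd x x0; have [j hj] := row_nz x x0.
rewrite mul_mx_diag mxE (bigD1 j) //= !mxE.
have h1 : 0 < x 0 j * d 0 j * x 0 j.
  rewrite mulrAC; apply: mulr_gt0 => //.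
  by rewrite -expr2 exprn_even_gt0 //.
have h2 : 0 <= \sum_(i < n | i != j) (\matrix_(i0, j0) (x i0 j0 * d 0 j0)) 0 i * x^T i 0.
  apply: sumr_ge0 => i _; rewrite !mxE mulrAC; apply: mulr_ge0; last exact: ltW.
  by rewrite -expr2 sqr_ge0.
lra.
Qed.


Lemma exQ (m L : R) : 0 < m -> m <= L -> ((1 < n)%N \/ ((0 < n)%N /\ m = L)) ->
  exists Q : 'M[R]_n, in_QmL m L Q.
Proof.
move=> hm hmL hn.
have n0 : (0 < n)%N by case: hn => [h|[]] //; apply: ltn_trans h.
pose d : 'rV[R]_n := \row_(i < n) (if (i : nat) == 0%N then m else L).
exists (diag_mx d); split.
- exact: tr_diag_mx.
- apply: diag_pos => j; rewrite mxE; case: ifP => _; lra.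
- by apply/diag_eig; exists (Ordinal n0); rewrite mxE.
- apply/diag_eig; case: hn => [h|[_ <-]].
    by exists (Ordinal h); rewrite mxE.
  by exists (Ordinal n0); rewrite mxE.
- move=> a /diag_eig [j ->]; rewrite mxE; case: ifP => _; apply/andP; split; lra.
Qed.

End Diag.

Section Conv.
Variable R : rcfType.

Lemma aff_lt (m L lam c d : R) : m <= lam <= L -> 0 < c + d * m -> 0 < c + d * L -> 0 < c + d * lam.
Proof.
move=> /andP[h1 h2] hm hL.
have [e|ne] := eqVneq lam m; first by rewrite e.
have hl : m < lam by rewrite lt_def ne h1.
have p1 : 0 <= (L - lam) * (c + d * m) by apply: mulr_ge0; lra.
have p2 : 0 < (lam - m) * (c + d * L) by apply: mulr_gt0; lra.
have e : (L - m) * (c + d * lam) = (L - lam) * (c + d * m) + (lam - m) * (c + d * L) by ring.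
have : 0 < (L - m) * (c + d * lam) by lra.
case: (ltrP 0 (c + d * lam)) => // h; nra.
Qed.

Lemma aff_le (m L lam c d : R) : m <= lam <= L -> 0 <= c + d * m -> 0 <= c + d * L -> 0 <= c + d * lam.
Proof.
move=> /andP[h1 h2] hm hL.
have [e|ne] := eqVneq lam m; first by rewrite e.
have hl : m < lam by rewrite lt_def ne h1.
have p1 : 0 <= (L - lam) * (c + d * m) by apply: mulr_ge0; lra.
have p2 : 0 <= (lam - m) * (c + d * L) by apply: mulr_ge0; lra.
have e : (L - m) * (c + d * lam) = (L - lam) * (c + d * m) + (lam - m) * (c + d * L) by ring.
have : 0 <= (L - m) * (c + d * lam) by lra.
case: (lerP 0 (c + d * lam)) => // h; nra.
Qed.

Lemma conv_delta (m L : R) (A B : R -> R) (a0 a1 b0 b1 : R) : m <= L ->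
  (forall l, A l = a0 + a1 * l) -> (forall l, B l = b0 + b1 * l) ->
  (forall lam, m <= lam <= L -> in_Delta (B lam) (A lam)) <->
  (in_Delta (B m) (A m) /\ in_Delta (B L) (A L)).
Proof.
move=> hmL hA hB; split.
  move=> H; split; apply: H; apply/andP; split; lra.
move=> [/andP[hm1 hm2] /andP[hL1 hL2]] lam hl.
have /absb_lt [p1 p2] : `|B m| < A m + 1 by lra.
have /absb_lt [q1 q2] : `|B L| < A L + 1 by lra.
rewrite !hA !hB in p1 p2 q1 q2 hm2 hL2.
apply/andP; split.
  have : `|B lam| < A lam + 1; last lra.
  apply/absb_lt; rewrite hA hB; split.
    have := @aff_lt m L lam (a0 + 1 - b0) (a1 - b1) hl ltac:(lra) ltac:(lra); lra.
  have := @aff_lt m L lam (a0 + 1 + b0) (a1 + b1) hl ltac:(lra) ltac:(lra); lra.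
rewrite hA; have := @aff_lt m L lam (1 - a0) (- a1) hl ltac:(lra) ltac:(lra); lra.
Qed.

Lemma conv_delta_rho (rho m L : R) (A B : R -> R) (a0 a1 b0 b1 : R) : m <= L -> 0 < rho ->
  (forall l, A l = a0 + a1 * l) -> (forall l, B l = b0 + b1 * l) ->
  (forall lam, m <= lam <= L -> in_Delta_rho rho (B lam) (A lam)) <->
  (in_Delta_rho rho (B m) (A m) /\ in_Delta_rho rho (B L) (A L)).
Proof.
move=> hmL hr hA hB; split.
  move=> H; split; apply: H; apply/andP; split; lra.
rewrite /in_Delta_rho.
have split_abs : forall u v : R, rho * (`|u| - rho) <= v -> rho * u <= v + rho^+2 /\ - (rho * u) <= v + rho^+2.
  move=> u v h; have h1 : rho * u <= rho * `|u| by rewrite ler_pM2l // ler_norm.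
  have h2 : rho * (- u) <= rho * `|u| by rewrite ler_pM2l // -normrN ler_norm.
  split; nra.
move=> [/andP[hm1 hm2] /andP[hL1 hL2]] lam hl.
have [p1 p2] := split_abs _ _ hm1.
have [q1 q2] := split_abs _ _ hL1.
rewrite !hA !hB in p1 p2 q1 q2 hm2 hL2.
apply/andP; split.
  have : rho * `|B lam| <= A lam + rho ^+ 2; last lra.
  apply: absrho => //; rewrite hA hB.
    have := @aff_le m L lam (a0 + rho^+2 - rho * b0) (a1 - rho * b1) hl ltac:(nra) ltac:(nra); nra.
  have := @aff_le m L lam (a0 + rho^+2 + rho * b0) (a1 + rho * b1) hl ltac:(nra) ltac:(nra); nra.
rewrite hA; have := @aff_le m L lam (rho^+2 - a0) (- a1) hl ltac:(lra) ltac:(lra); lra.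
Qed.

End Conv.

Theorem lemma3 (R : rcfType) (n : nat) (m L alpha beta gamma : R)
  (hm : 0 < m) (hmL : m <= L) (hn : (1 < n)%N \/ ((0 < n)%N /\ m = L)) :
  let a := a_fun alpha beta gamma in
  let b := b_fun alpha beta gamma in
  [/\ stable_all n m L alpha beta gamma <->
        (forall lam, m <= lam <= L -> in_Delta (b lam) (a lam)),
      (forall lam, m <= lam <= L -> in_Delta (b lam) (a lam)) <->
        (in_Delta (b m) (a m) /\ in_Delta (b L) (a L)) &
      forall rho : R, 0 < rho < 1 ->
        (rate_all n m L alpha beta gamma rho <->
           (forall lam, m <= lam <= L -> in_Delta_rho rho (b lam) (a lam))) /\
        ((forall lam, m <= lam <= L -> in_Delta_rho rho (b lam) (a lam)) <->
           (in_Delta_rho rho (b m) (a m) /\ in_Delta_rho rho (b L) (a L)))].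
Proof.
move=> a b.
have hA : forall l, a l = beta + (- (gamma * alpha)) * l.
  by move=> l; rewrite /a /a_fun; ring.
have hB : forall l, b l = (- (1 + beta)) + ((1 + gamma) * alpha) * l.
  by move=> l; rewrite /b /b_fun; ring.
have Hconv := @conv_delta R m L a b _ _ _ _ hmL hA hB.
have [Q hQ] := @exQ R n m L hm hmL hn.
split => //.
- rewrite Hconv; split.
  + move=> H; case: (hQ) => _ _ hem heL _.
    split; apply/(CA R) => z ez; apply: (H Q hQ).
      exact: (@E1 R n alpha beta gamma Q m z hem ez).
    exact: (@E1 R n alpha beta gamma Q L z heL ez).
  + move=> H Q' [hT _ hem _ hall] z hz.
    have [mu [hmu ez]] := @E2 R n alpha beta gamma Q' m z hT hem hz.
    have hmuI := hall mu hmu.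
    by move: z ez {hz}; apply/(CA R (b mu) (a mu)); apply: (proj2 Hconv H).
- move=> rho /andP[hr0 hr1].
  have Hconvr := @conv_delta_rho R rho m L a b _ _ _ _ hmL hr0 hA hB.
  split => //.
  rewrite Hconvr; split.
  + move=> H; case: (hQ) => _ _ hem heL _.
    split; apply/(CB R rho _ _ hr0) => z ez; apply: (H Q hQ).
      exact: (@E1 R n alpha beta gamma Q m z hem ez).
    exact: (@E1 R n alpha beta gamma Q L z heL ez).
  + move=> H Q' [hT _ hem _ hall] z hz.
    have [mu [hmu ez]] := @E2 R n alpha beta gamma Q' m z hT hem hz.
    have hmuI := hall mu hmu.
    by move: z ez {hz}; apply/(CB R rho (b mu) (a mu) hr0); apply: (proj2 Hconvr H).
Qed.
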